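(* Let $k \ge 1$ and let $V = L \sqcup R$ be a finite set of nails split into disjoint parts with $|L| = n_1$, $|R| = n_2$. Call an integer $j$ feasible if $\max(0, k - n_2) \le j \le \min(k, n_1)$. For a set $J$ of feasible indices define the function $f_J$ on subsets $S \subseteq V$ by $f_J(S) = \mathsf{fall}$ if there is $j \in J$ with $|S \cap L| \ge j$ and $|S \cap R| \ge k - j$, and $f_J(S) = \mathsf{hang}$ otherwise. Let $J_1, J_2$ be disjoint nonempty sets of feasible indices, and let $S \subseteq V$ satisfy $f_{J_1}(S) = f_{J_2}(S) = \mathsf{hang}$. Then there exists $S'$ with $S \subseteq S' \subseteq V$ and $f_{J_1}(S') \ne f_{J_2}(S')$.
   Context: Nails are elements of a finite set; the outcomes are $\mathsf{hang}$ and $\mathsf{fall}$. *)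

(* Defs.v *)
From mathcomp Require Import all_boot.
Set Implicit Arguments. Unset Strict Implicit. Unset Printing Implicit Defensive.

Inductive outcome := hang | fall.

(* Feasible index j for threshold k and parts L, R:
   max(0, k - n2) <= j <= min(k, n1); truncated subtraction gives max(0,k-n2). *)
Definition feasible {T : finType} (k : nat) (L R : {set T}) (j : nat) : bool :=
  (k - #|R| <= j) && (j <= minn k #|L|).

Definition fJ {T : finType} (k : nat) (L R : {set T}) (J : seq nat) (S : {set T})
  : outcome :=
  if has (fun j => (j <= #|S :&: L|) && (k - j <= #|S :&: R|)) J then fall else hang.

(* Main.v *)
Require Import Defs.
From mathcomp Require Import all_boot.
From mathcomp Require Import zify.

Lemma sub_of_card (T : finType) (A : {set T}) m :
  m <= #|A| -> exists X : {set T}, X \subset A /\ #|X| = m.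
Proof.
move=> hm; exists [set x in take m (enum A)]; split.
  by apply/subsetP => x; rewrite inE => /mem_take; rewrite mem_enum.
rewrite cardsE (card_uniqP _) ?take_uniq ?enum_uniq //.
by rewrite size_take_min -cardE; lia.
Qed.

Lemma pick_star c (s : seq nat) : s != [::] ->
  exists2 x, x \in s & forall y, y \in s -> (x < y -> c <= y) /\ (y < x -> y < c).
Proof.
move=> sn.
case: (boolP (has (fun y => y < c) s)) => [/hasP hs | /hasPn hs].
  have ex : exists n, (n \in s) && (n < c).
    by case: hs => y ys yc; exists y; rewrite ys yc.
  have bd : forall n, (n \in s) && (n < c) -> n <= c by move=> n /andP [_ /ltnW].
  case: (ex_maxnP ex bd) => m /andP [ms mc] mx.
  exists m => // y ys; split.
    move=> my; rewrite leqNgt; apply/negP => yc.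
    by have := mx y; rewrite ys yc => /(_ isT); lia.
  by move=> ym; lia.
have ex : exists n, n \in s.
  by case: s sn {hs} => // a s' _; exists a; rewrite inE eqxx.
case: (ex_minnP ex) => m ms mn.
exists m => // y ys; split.
  by move=> _; have := hs y ys; rewrite -leqNgt.
by move=> ym; have := mn y ys; lia.
Qed.

Theorem lemma3 (T : finType) (L R : {set T}) (k : nat) (J1 J2 : seq nat)
  (S : {set T}) :
  1 <= k ->
  [disjoint L & R] -> L :|: R = [set: T] ->
  all (feasible k L R) J1 -> all (feasible k L R) J2 ->
  J1 != [::] -> J2 != [::] ->
  (forall j, j \in J1 -> j \notin J2) ->
  fJ k L R J1 S = hang -> fJ k L R J2 S = hang ->
  exists S' : {set T}, S \subset S' /\ fJ k L R J1 S' <> fJ k L R J2 S'.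
Proof.
move=> k1 dLR _ f1 f2 n1 n2 dJ h1 h2.
set a := #|S :&: L|; set b := #|S :&: R|.
have hang_all : forall j, j \in J1 ++ J2 -> ~~ ((j <= a) && (k - j <= b)).
  move: h1 h2; rewrite /fJ.
  case: (boolP (has _ J1)) => // /hasPn H1 _.
  case: (boolP (has _ J2)) => // /hasPn H2 _.
  by move=> j; rewrite mem_cat => /orP [/H1 | /H2].
have nJ : J1 ++ J2 != [::] by move: n1; rewrite -!size_eq0 size_cat; lia.
have [js jsJ jsP] := @pick_star (k - b) _ nJ.
have fs : feasible k L R js.
  by move: jsJ; rewrite mem_cat => /orP [/(allP f1) | /(allP f2)].
move: fs => /andP [fs1 fs2].
have hLa : a <= #|L| by rewrite /a subset_leq_card // subsetIr.
have hRb : b <= #|R| by rewrite /b subset_leq_card // subsetIr.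
have [X [XL cX]] : exists X : {set T}, X \subset L :\: S /\ #|X| = js - a.
  apply: sub_of_card; rewrite cardsD setIC -/a; lia.
have [Y [YR cY]] : exists Y : {set T}, Y \subset R :\: S /\ #|Y| = (k - js) - b.
  apply: sub_of_card; rewrite cardsD setIC -/b; lia.
have hLR : forall x, x \in L -> x \notin R.
  by move=> x xL; apply/negP => xR; move: dLR; rewrite disjoint_subset => /subsetP /(_ x xL); rewrite inE xR.
set S' := S :|: X :|: Y.
have eL : S' :&: L = (S :&: L) :|: X.
  apply/setP => x; rewrite !inE.
  have := subsetP XL x; have := subsetP YR x; have := hLR x.
  rewrite !inE.
  case: (x \in S); case: (x \in X); case: (x \in Y); case: (x \in L); case: (x \in R) => //=;
  by move=> H1 H2 H3; (try by have := H1 isT); (try by have := H2 isT); (try by have := H3 isT).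
have eR : S' :&: R = (S :&: R) :|: Y.
  apply/setP => x; rewrite !inE.
  have := subsetP XL x; have := subsetP YR x; have := hLR x.
  rewrite !inE.
  case: (x \in S); case: (x \in X); case: (x \in Y); case: (x \in L); case: (x \in R) => //=;
  by move=> H1 H2 H3; (try by have := H1 isT); (try by have := H2 isT); (try by have := H3 isT).
have dX : (S :&: L) :&: X = set0.
  apply/setP => x; rewrite !inE; have := subsetP XL x; rewrite !inE.
  case: (x \in S); case: (x \in X); case: (x \in L) => //=; try by move=> H; have := H isT.
have dY : (S :&: R) :&: Y = set0.
  apply/setP => x; rewrite !inE; have := subsetP YR x; rewrite !inE.
  case: (x \in S); case: (x \in Y); case: (x \in R) => //=; try by move=> H; have := H isT.
have cL : #|S' :&: L| = a + (js - a) by rewrite eL cardsU dX cards0 cX -/a; lia.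
have cR : #|S' :&: R| = b + ((k - js) - b) by rewrite eR cardsU dY cards0 cY -/b; lia.
have fall_js : (js <= #|S' :&: L|) && (k - js <= #|S' :&: R|).
  by rewrite cL cR; apply/andP; split; lia.
have nfall : forall j, j \in J1 ++ J2 -> j != js ->
    ~~ ((j <= #|S' :&: L|) && (k - j <= #|S' :&: R|)).
  move=> j jJ jn; have := hang_all j jJ; have [P1 P2] := jsP j jJ.
  rewrite cL cR; move: jn => /eqP jn.
  case: (ltngtP js j) => [lt|gt|eq]; last by move: jn; rewrite eq.
    have := P1 lt; move=> H; apply: contraNN => /andP [c1 c2]; apply/andP; lia.
  have := P2 gt; move=> H _; apply/negP => /andP [c1 c2]; lia.
exists S'; split; first by rewrite /S' -setUA subsetUl.
rewrite /fJ.
move: jsJ; rewrite mem_cat => /orP [jJ | jJ].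
  have -> : has (fun j => (j <= #|S' :&: L|) && (k - j <= #|S' :&: R|)) J1.
    by apply/hasP; exists js.
  have -> : has (fun j => (j <= #|S' :&: L|) && (k - j <= #|S' :&: R|)) J2 = false.
    apply/negbTE/hasPn => j jJ2; apply: nfall; first by rewrite mem_cat jJ2 orbT.
    by apply/eqP => ej; move: (dJ _ jJ); rewrite -ej jJ2.
  by [].
have -> : has (fun j => (j <= #|S' :&: L|) && (k - j <= #|S' :&: R|)) J2.
  by apply/hasP; exists js.
have -> : has (fun j => (j <= #|S' :&: L|) && (k - j <= #|S' :&: R|)) J1 = false.
  apply/negbTE/hasPn => j jJ1; apply: nfall; first by rewrite mem_cat jJ1.
  by apply/eqP => ej; move: (dJ _ jJ1); rewrite ej jJ.
by [].
Qed.
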